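(* There exist a universal constant $c>0$ and a family of weighted graphs, with arbitrarily large number $n$ of vertices, such that (1) all edge weights equal $1/2$; (2) $\mathsf{OPT}^{\mathsf{IR}}=O(1)$; (3) every persuasive binary signaling scheme has cost at least $c\,n$.
   Context: Setting. $V$ is a finite set of $n$ task types and $W=(W_{u,v})_{u,v\in V}$ is a symmetric matrix with entries in $[0,1]$ and $W_{v,v}=1$; edges are pairs $\{u,v\}$, $u\ne v$, with $W_{u,v}>0$, of weight $W_{u,v}$. A vector $\theta\in\mathbb{R}_{\ge0}^V$ is feasible if $W\theta\ge\mathbf 1$ coordinatewise. $\mathsf{OPT}^{\mathsf{IR}}=\min\{\|\theta\|_1:\theta\in[0,1]^V\text{ feasible}\}$. Signaling. There are $n$ agents; the type profile $t$ is a uniformly random bijection $[n]\to V$. A signaling scheme with finite signal space $\Sigma\subset[0,1]$ is a map $\varphi$ assigning to each bijection $t$ a distribution $\varphi(t)$ on $\Sigma^V$; given $t$, $s\sim\varphi(t)$ is drawn and agent $i$ privately receives $s_{t_i}$. For agent $i$, a signal $\theta\in\Sigma$ with $\Pr[s_{t_i}=\theta]>0$ and $x\ge0$, let $Q_i(x\mid\theta)=\mathbb{E}\big[x+\sum_{v'\neq t_i}W_{t_i,v'}s_{v'}\,\big|\,s_{t_i}=\theta\big]$. The scheme is persuasive if for every agent $i$ and every such $\theta$: $Q_i(\theta\mid\theta)\ge1$ and $\theta=\min\{x\ge0:Q_i(x\mid\theta)\ge1\}$. Its cost is $\mathbb{E}[\|s\|_1]$. Binary means $|\Sigma|=2$.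 *)

(* Defs.v *)
From HB Require Import structures.
From mathcomp Require Import all_boot all_order all_algebra all_fingroup.
From mathcomp Require Import classical_sets reals.

Set Implicit Arguments. Unset Strict Implicit. Unset Printing Implicit Defensive.
Import Order.TTheory GRing.Theory Num.Theory.
Local Open Scope ring_scope.
Local Open Scope classical_set_scope.

Section Defs.
Variables (R : realType) (n : nat).

Definition half_weight_graph (W : 'M[R]_n) : Prop :=
  (forall u v, W u v = W v u) /\
  (forall u v, 0 <= W u v <= 1) /\
  (forall v, W v v = 1) /\
  (forall u v, u != v -> 0 < W u v -> W u v = 2^-1).

Definition feasible (W : 'M[R]_n) (theta : 'I_n -> R) : Prop :=
  (forall v, 0 <= theta v) /\ (forall u, 1 <= \sum_(v < n) W u v * theta v).

Definition OPT_IR (W : 'M[R]_n) : R :=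
  inf [set x : R | exists theta : 'I_n -> R,
         (forall v, 0 <= theta v <= 1) /\ feasible W theta /\
         x = \sum_(v < n) `|theta v|].

(* A binary signaling scheme: signal space Sigma = {sig 0, sig 1} subset of
   [0,1] with |Sigma| = 2 (sig injective); a signal vector in Sigma^V is
   encoded as s : {ffun 'I_n -> 'I_2} (actual signal of type v is sig (s v)).
   For each type profile t (bijection agents 'I_n -> types 'I_n, i.e. a
   permutation), phi t is a probability distribution on Sigma^V. *)
Definition binary_scheme (sig : 'I_2 -> R)
    (phi : {perm 'I_n} -> {ffun 'I_n -> 'I_2} -> R) : Prop :=
  injective sig /\ (forall k, 0 <= sig k <= 1) /\
  (forall t s, 0 <= phi t s) /\ (forall t, \sum_s phi t s = 1).

Definition jointP (phi : {perm 'I_n} -> {ffun 'I_n -> 'I_2} -> R) t s : R :=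
  phi t s / (#|{perm 'I_n}|)%:R.

Definition prSig phi (i : 'I_n) (k : 'I_2) : R :=
  \sum_(t : {perm 'I_n}) \sum_(s : {ffun 'I_n -> 'I_2})
     (if s (t i) == k then jointP phi t s else 0).

Definition Q (W : 'M[R]_n) (sig : 'I_2 -> R) phi (i : 'I_n) (x : R)
    (k : 'I_2) : R :=
  (\sum_(t : {perm 'I_n}) \sum_(s : {ffun 'I_n -> 'I_2})
     (if s (t i) == k then
        jointP phi t s *
        (x + \sum_(v' < n | v' != t i) W (t i) v' * sig (s v'))
      else 0)) / prSig phi i k.

Definition persuasive (W : 'M[R]_n) (sig : 'I_2 -> R) phi : Prop :=
  forall (i : 'I_n) (k : 'I_2), 0 < prSig phi i k ->
    1 <= Q W sig phi i (sig k) k /\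
    (0 <= sig k /\ 1 <= Q W sig phi i (sig k) k) /\
    (forall x, 0 <= x -> 1 <= Q W sig phi i x k -> sig k <= x).

Definition cost (sig : 'I_2 -> R) phi : R :=
  \sum_(t : {perm 'I_n}) \sum_(s : {ffun 'I_n -> 'I_2})
     jointP phi t s * \sum_(v < n) `|sig (s v)|.

End Defs.

(* Main.v *)
Require Import Defs.
From HB Require Import structures.
From mathcomp Require Import all_boot all_order all_algebra all_fingroup.
From mathcomp Require Import classical_sets reals.
From mathcomp Require Import ring lra zify.
Import Order.TTheory GRing.Theory Num.Theory.
Local Open Scope ring_scope.

(* Graph family: two adjacent hubs (vertices 0,1), and
   4r leaves grouped in r cliques K4; every leaf adjacent to both hubs. *)



Section Agg.
Context (R : realType) (n : nat) (W : 'M[R]_n) (sig : 'I_2 -> R)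
  (phi : {perm 'I_n} -> {ffun 'I_n -> 'I_2} -> R).

Definition Cv (s : {ffun 'I_n -> 'I_2}) (v : 'I_n) : R :=
  \sum_(v' < n | v' != v) W v v' * sig (s v').

Definition Dk (k : 'I_2) (s : {ffun 'I_n -> 'I_2}) : R :=
  \sum_(v < n | s v == k) (sig k - 1 + Cv s v).

Definition EJ (X : {ffun 'I_n -> 'I_2} -> R) : R :=
  \sum_(t : {perm 'I_n}) \sum_(s : {ffun 'I_n -> 'I_2}) jointP phi t s * X s.

Definition Mi (i : 'I_n) (k : 'I_2) : R :=
  \sum_(t : {perm 'I_n}) \sum_(s : {ffun 'I_n -> 'I_2})
     (if s (t i) == k then jointP phi t s * Cv s (t i) else 0).

Definition Gi (i : 'I_n) (k : 'I_2) : R :=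
  \sum_(t : {perm 'I_n}) \sum_(s : {ffun 'I_n -> 'I_2})
     (if s (t i) == k then jointP phi t s * (sig k - 1 + Cv s (t i)) else 0).

Lemma Q_eq i x k : Q W sig phi i x k = (x * prSig phi i k + Mi i k) / prSig phi i k.
Proof.
rewrite /Q /prSig /Mi; congr (_ / _).
rewrite mulr_sumr -big_split; apply: eq_bigr => t _.
rewrite mulr_sumr -big_split; apply: eq_bigr => s _.
by case: ifP => _ /=; rewrite /Cv; ring.
Qed.

Lemma Gi_eq i k : Gi i k = (sig k - 1) * prSig phi i k + Mi i k.
Proof.
rewrite /Gi /prSig /Mi.
rewrite mulr_sumr -big_split; apply: eq_bigr => t _.
rewrite mulr_sumr -big_split; apply: eq_bigr => s _.
by case: ifP => _ /=; ring.
Qed.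

Lemma sumGi k : \sum_(i < n) Gi i k = EJ (Dk k).
Proof.
rewrite /Gi /EJ exchange_big; apply: eq_bigr => t _.
rewrite exchange_big; apply: eq_bigr => s _.
rewrite /Dk mulr_sumr.
rewrite [RHS](reindex_inj (@perm_inj _ t)) /=.
rewrite [RHS]big_mkcond; apply: eq_bigr => i _; by case: ifP.
Qed.

Hypothesis Hb : binary_scheme sig phi.
Hypothesis Hw : forall u v, 0 <= W u v <= 1.

Lemma J_ge0 t s : 0 <= jointP phi t s.
Proof.
case: Hb => _ [_ [hp _]]; rewrite /jointP divr_ge0 // ler0n //.
Qed.

Lemma Cv_ge0 s v : 0 <= Cv s v.
Proof.
case: Hb => _ [hs _]; apply: sumr_ge0 => v' _.
by apply: mulr_ge0; [case/andP: (Hw v v')| case/andP: (hs (s v'))].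
Qed.

Lemma Cv_le s v : Cv s v <= n%:R.
Proof.
case: Hb => _ [hs _].
apply: (le_trans (y := \sum_(v' < n | v' != v) 1)).
  apply: ler_sum => v' _.
  case/andP: (Hw v v') => h0 h1; case/andP: (hs (s v')) => h2 h3.
  by rewrite -[1]mulr1; apply: ler_pM.
rewrite sumr_const; apply: (le_trans (y := #|'I_n|%:R)).
  by rewrite ler_nat; apply: max_card.
by rewrite card_ord.
Qed.

Lemma pr_ge0 i k : 0 <= prSig phi i k.
Proof.
apply: sumr_ge0 => t _; apply: sumr_ge0 => s _; case: ifP => _ //; exact: J_ge0.
Qed.

Lemma Mi_bounds i k : 0 <= Mi i k <= n%:R * prSig phi i k.
Proof.
apply/andP; split.
  apply: sumr_ge0 => t _; apply: sumr_ge0 => s _; case: ifP => _ //.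
  by apply: mulr_ge0; [exact: J_ge0 | exact: Cv_ge0].
rewrite /Mi /prSig mulr_sumr; apply: ler_sum => t _.
rewrite mulr_sumr; apply: ler_sum => s _; case: ifP => _; last by rewrite mulr0.
rewrite [_ * jointP _ _ _]mulrC; apply: ler_wpM2l; [exact: J_ge0 | exact: Cv_le].
Qed.

Hypothesis Hp : persuasive W sig phi.

Lemma Gi_ge0 i k : 0 <= Gi i k.
Proof.
rewrite Gi_eq.
have := pr_ge0 i k; rewrite le0r => /orP [/eqP p0 | ppos].
  have := Mi_bounds i k; rewrite p0 mulr0 => /andP [h1 h2].
  have -> : Mi i k = 0 by apply/eqP; rewrite eq_le h1 h2.
  by rewrite mulr0 addr0.
case: (Hp i k ppos) => h _; move: h; rewrite Q_eq ler_pdivlMr // mul1r => h.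
lra.
Qed.

Lemma Gi_le0 i k : 0 < sig k -> Gi i k <= 0.
Proof.
move=> sk; rewrite Gi_eq.
have := pr_ge0 i k; rewrite le0r => /orP [/eqP p0 | ppos].
  have := Mi_bounds i k; rewrite p0 mulr0 => /andP [h1 h2].
  have -> : Mi i k = 0 by apply/eqP; rewrite eq_le h1 h2.
  by rewrite mulr0 addr0.
case: (Hp i k ppos) => _ [_ hmin].
set pr := prSig phi i k; set M := Mi i k.
have prne : pr != 0 by rewrite gt_eqF.
case: (lerP 0 (1 - M / pr)) => hx.
  have := hmin _ hx; rewrite Q_eq -/pr -/M.
  have -> : ((1 - M / pr) * pr + M) / pr = 1.
    by field.
  move=> /(_ (lexx 1)) hs.
  have : sig k * pr <= (1 - M / pr) * pr by rewrite ler_pM2r.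
  have -> : (1 - M / pr) * pr = pr - M by field.
  lra.
have := hmin 0 (lexx 0); rewrite Q_eq -/pr -/M mul0r add0r.
have : 1 <= M / pr by lra.
by move=> h /(_ h); lra.
Qed.

Lemma agg_ge0 k : 0 <= EJ (Dk k).
Proof. rewrite -sumGi; apply: sumr_ge0 => i _; exact: Gi_ge0. Qed.

Lemma agg_le0 k : 0 < sig k -> EJ (Dk k) <= 0.
Proof.
move=> sk; rewrite -sumGi; apply: sumr_le0 => i _; exact: Gi_le0.
Qed.

Lemma sumJ : \sum_(t : {perm 'I_n}) \sum_(s : {ffun 'I_n -> 'I_2}) jointP phi t s = 1.
Proof.
case: Hb => _ [_ [_ h1]].
rewrite /jointP.
under eq_bigr => t _ do rewrite -mulr_suml h1 mul1r.
rewrite sumr_const -[X in X = 1]mulr_natl mulfV // pnatr_eq0 -lt0n; apply/card_gt0P; by exists 1%g.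
Qed.

End Agg.



Definition adjn (u v : nat) : bool :=
  (u != v) && [|| (u < 2)%N, (v < 2)%N | ((u - 2) %/ 4 == (v - 2) %/ 4)%N].

Definition nn (r : nat) := (4 * r + 1).+1.
Definition ell (q k : nat) := (4 * q + k).+2.

Section Sums.
Context (R : realType).

Lemma sum_blocks (F : nat -> R) r :
  \sum_(0 <= i < 4 * r) F i =
  \sum_(0 <= q < r) (F (4 * q + 0)%N + F (4 * q + 1)%N + F (4 * q + 2)%N + F (4 * q + 3)%N).
Proof.
elim: r => [|r IH]; first by rewrite muln0 !big_geq.
rewrite [RHS]big_nat_recr //= -IH (big_cat_nat (n := (4 * r)%N)) //=; last first.
  by rewrite leq_pmul2l.
congr (_ + _).
rewrite mulnS (addnC 4) addn4.
rewrite big_ltn; last by lia.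
rewrite big_ltn; last by lia.
rewrite big_ltn; last by lia.
rewrite big_ltn; last by lia.
rewrite big_geq // addr0 !addrA.
by rewrite addn0 addn1 addn2 addn3.
Qed.

Lemma sum_nn (F : nat -> R) r :
  \sum_(v < nn r) F v =
  F 0%N + F 1%N + \sum_(0 <= q < r)
     (F (ell q 0) + F (ell q 1) + F (ell q 2) + F (ell q 3)).
Proof.
rewrite /nn addn1 big_ord_recl big_ord_recl /= addrA; congr (_ + _).
rewrite -(big_mkord xpredT (fun i => F i.+2)) /= sum_blocks.
by apply: eq_bigr => q _; rewrite /ell.
Qed.

Lemma sum_diag (Z : nat -> R) r q : (q < r)%N ->
  \sum_(0 <= q' < r) (if q == q' then Z q' else 0) = Z q.
Proof.
move=> hq; rewrite big_mkord (bigD1 (Ordinal hq)) //= eqxx big1 ?addr0 //.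
move=> i hi; case: eqP => // hh; exfalso; move/eqP: hi; apply.
by apply: val_inj.
Qed.

End Sums.

Lemma adjn0 v : adjn 0 v = (v != 0)%N.
Proof. by rewrite /adjn /= andbT eq_sym. Qed.

Lemma adjn1 v : adjn 1 v = (v != 1)%N.
Proof. by rewrite /adjn /= andbT eq_sym. Qed.

Lemma adjnl0 q k : adjn (ell q k) 0 = true.
Proof. by []. Qed.

Lemma adjnl1 q k : adjn (ell q k) 1 = true.
Proof. by []. Qed.

Lemma div4 q k : (k < 4)%N -> ((4 * q + k) %/ 4 = q)%N.
Proof. by move=> hk; rewrite mulnC divnMDl // divn_small // addn0. Qed.

Lemma adjnll q k q' k' : (k < 4)%N -> (k' < 4)%N ->
  adjn (ell q k) (ell q' k') = (q == q') && (k != k').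
Proof.
move=> hk hk'; rewrite /adjn /ell /= !subSS !subn0 !div4 //.
case: (q =P q') => [<-|hq] /=.
  by rewrite andbT !eqSS eqn_add2l.
by rewrite andbF.
Qed.

Lemma adjn_irr v : adjn v v = false.
Proof. by rewrite /adjn eqxx. Qed.

Section Inner.
Context (R : realType) (r : nat) (g : nat -> R).

Lemma inner0 : \sum_(v < nn r) (if adjn 0 v then g v else 0) =
  g 1%N + \sum_(0 <= q < r) (g (ell q 0) + g (ell q 1) + g (ell q 2) + g (ell q 3)).
Proof. by rewrite (@sum_nn R (fun v => if adjn 0 v then g v else 0)) !adjn0 /= add0r. Qed.

Lemma inner1 : \sum_(v < nn r) (if adjn 1 v then g v else 0) =
  g 0%N + \sum_(0 <= q < r) (g (ell q 0) + g (ell q 1) + g (ell q 2) + g (ell q 3)).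
Proof. by rewrite (@sum_nn R (fun v => if adjn 1 v then g v else 0)) !adjn1 /= addr0. Qed.

Lemma innerl q k : (q < r)%N -> (k < 4)%N ->
  \sum_(v < nn r) (if adjn (ell q k) v then g v else 0) =
  g 0%N + g 1%N + ((if k != 0%N then g (ell q 0) else 0) + (if k != 1%N then g (ell q 1) else 0)
     + (if k != 2%N then g (ell q 2) else 0) + (if k != 3%N then g (ell q 3) else 0)).
Proof.
move=> hq hk; rewrite (@sum_nn R (fun v => if adjn (ell q k) v then g v else 0)) adjnl0 adjnl1; congr (_ + _).
rewrite -(@sum_diag R (fun q' => (if k != 0%N then g (ell q' 0) else 0) + (if k != 1%N then g (ell q' 1) else 0)
     + (if k != 2%N then g (ell q' 2) else 0) + (if k != 3%N then g (ell q' 3) else 0)) r q hq).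
apply: eq_bigr => q' _; rewrite !adjnll //.
by case: (q == q') => /=; [case: (k != 0%N); case: (k != 1%N); case: (k != 2%N); case: (k != 3%N) | rewrite !addr0].
Qed.

End Inner.



Section Profile.
Context (R : realType) (r : nat) (beta : nat -> bool) (a b w l m : R).

Definition sg v : R := if beta v then b else a.
Definition fv v : R := w * sg v - (if beta v then l * (b - 1) else m * (a - 1)).
Definition hv u v : R := (if beta u then l else m) * sg v.
Definition inn u : R := \sum_(v < nn r) (if adjn u v then hv u v else 0).
Definition Tot : R := \sum_(u < nn r) (fv u - 2^-1 * inn u).

Definition hubp : R := fv 0 + fv 1 - 2^-1 * (hv 0 1 + hv 1 0).
Definition hl q : R := hv 0 (ell q 0) + hv 0 (ell q 1) + hv 0 (ell q 2) + hv 0 (ell q 3)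
  + (hv 1 (ell q 0) + hv 1 (ell q 1) + hv 1 (ell q 2) + hv 1 (ell q 3)).
Definition cl q : R :=
  (fv (ell q 0) - 2^-1 * inn (ell q 0)) + (fv (ell q 1) - 2^-1 * inn (ell q 1))
  + (fv (ell q 2) - 2^-1 * inn (ell q 2)) + (fv (ell q 3) - 2^-1 * inn (ell q 3))
  - 2^-1 * hl q.

Lemma Tot_eq : Tot = hubp + \sum_(0 <= q < r) cl q.
Proof.
rewrite /Tot (@sum_nn R (fun u => fv u - 2^-1 * inn u)).
rewrite {1}/inn (@inner0 R r (hv 0)) {1}/inn (@inner1 R r (hv 1)).
have -> : \sum_(0 <= q < r) cl q =
   \sum_(0 <= q < r) ((fv (ell q 0) - 2^-1 * inn (ell q 0)) + (fv (ell q 1) - 2^-1 * inn (ell q 1))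
  + (fv (ell q 2) - 2^-1 * inn (ell q 2)) + (fv (ell q 3) - 2^-1 * inn (ell q 3)))
   - 2^-1 * (\sum_(0 <= q < r) (hv 0 (ell q 0) + hv 0 (ell q 1) + hv 0 (ell q 2) + hv 0 (ell q 3))
      + \sum_(0 <= q < r) (hv 1 (ell q 0) + hv 1 (ell q 1) + hv 1 (ell q 2) + hv 1 (ell q 3))).
  rewrite -big_split mulr_sumr -sumrB; apply: eq_bigr => q _ /=; by rewrite /cl /hl.
rewrite /hubp; ring.
Qed.

Lemma innl q k : (q < r)%N -> (k < 4)%N -> inn (ell q k) =
  hv (ell q k) 0 + hv (ell q k) 1 + ((if k != 0%N then hv (ell q k) (ell q 0) else 0)
     + (if k != 1%N then hv (ell q k) (ell q 1) else 0)
     + (if k != 2%N then hv (ell q k) (ell q 2) else 0)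
     + (if k != 3%N then hv (ell q k) (ell q 3) else 0)).
Proof. by move=> hq hk; rewrite /inn (@innerl R r (hv (ell q k))). Qed.

Lemma Tot_lb (hb cb : R) : hb <= hubp -> (forall q, (q < r)%N -> cb <= cl q) ->
  hb + r%:R * cb <= Tot.
Proof.
move=> h1 h2; rewrite Tot_eq; apply: lerD => //.
have -> : r%:R * cb = \sum_(0 <= q < r) cb.
  by rewrite sumr_const_nat subn0 mulr_natl.
by apply: ler_sum_nat => q /andP [_ hq]; apply: h2.
Qed.

End Profile.

Section Regions.
Context (R : realType) (r : nat) (beta : nat -> bool) (a b : R).

Lemma clq_III q : (q < r)%N -> 0 <= a <= 1/20 -> 1/5 <= b <= 4/5 ->
  1/4 <= @cl R r beta a b 1 (1/40) (3/5) q.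
Proof.
move=> hq /andP [ha1 ha2] /andP [hb1 hb2].
rewrite /cl !innl // /hl /hv /fv /sg /=.
case: (beta 0%N); case: (beta 1%N); case: (beta (ell q 0)); case: (beta (ell q 1));
  case: (beta (ell q 2)); case: (beta (ell q 3)); lra.
Qed.

Lemma hub_III : 0 <= a <= 1/20 -> 1/5 <= b <= 4/5 ->
  0 <= @hubp R beta a b 1 (1/40) (3/5).
Proof.
move=> /andP [ha1 ha2] /andP [hb1 hb2].
rewrite /hubp /hv /fv /sg /=.
case: (beta 0%N); case: (beta 1%N); lra.
Qed.

Lemma clq_I q : (q < r)%N -> 0 <= a <= 1/20 -> 4/5 <= b <= 1 ->
  (if beta 0%N != beta 1%N then 1 else 0) <= @cl R r beta a b 0 (-5) 1 q.
Proof.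
move=> hq /andP [ha1 ha2] /andP [hb1 hb2].
rewrite /cl !innl // /hl /hv /fv /sg /=.
case: (beta 0%N); case: (beta 1%N); case: (beta (ell q 0)); case: (beta (ell q 1));
  case: (beta (ell q 2)); case: (beta (ell q 3)); rewrite /=; lra.
Qed.

Lemma hub_I : 0 <= a <= 1/20 -> 4/5 <= b <= 1 ->
  (if beta 0%N != beta 1%N then -1/2 else 1) <= @hubp R beta a b 0 (-5) 1.
Proof.
move=> /andP [ha1 ha2] /andP [hb1 hb2].
rewrite /hubp /hv /fv /sg /=.
case: (beta 0%N); case: (beta 1%N); rewrite /=; lra.
Qed.

Lemma clq_II q : (q < r)%N -> 0 <= a <= 1/20 -> 0 <= b <= 1/5 ->
  0 <= @cl R r beta a b 0 (9/2) 1 q.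
Proof.
move=> hq /andP [ha1 ha2] /andP [hb1 hb2].
rewrite /cl !innl // /hl /hv /fv /sg /=.
case: (beta 0%N); case: (beta 1%N); case: (beta (ell q 0)); case: (beta (ell q 1));
  case: (beta (ell q 2)); case: (beta (ell q 3)); lra.
Qed.

Lemma hub_II : 0 <= a <= 1/20 -> 0 <= b <= 1/5 ->
  1 <= @hubp R beta a b 0 (9/2) 1.
Proof.
move=> /andP [ha1 ha2] /andP [hb1 hb2].
rewrite /hubp /hv /fv /sg /=.
case: (beta 0%N); case: (beta 1%N); lra.
Qed.

Lemma Tot_III : 0 <= a <= 1/20 -> 1/5 <= b <= 4/5 ->
  r%:R / 4 <= @Tot R r beta a b 1 (1/40) (3/5).
Proof.
move=> ha hb.
have := @Tot_lb R r beta a b 1 (1/40) (3/5) 0 (1/4) (hub_III ha hb) (fun q hq => clq_III q hq ha hb).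
lra.
Qed.

Lemma Tot_I : (0 < r)%N -> 0 <= a <= 1/20 -> 4/5 <= b <= 1 ->
  1/2 <= @Tot R r beta a b 0 (-5) 1.
Proof.
move=> hr ha hb.
have h := @Tot_lb R r beta a b 0 (-5) 1 _ _ (hub_I ha hb) (fun q hq => clq_I q hq ha hb).
have hr1 : (1 : R) <= r%:R by rewrite ler1n.
move: h; case: (beta 0%N != beta 1%N) => h.
  have : 1 <= r%:R * (1 : R) by rewrite mulr1.
  lra.
lra.
Qed.

Lemma Tot_II : 0 <= a <= 1/20 -> 0 <= b <= 1/5 ->
  1 <= @Tot R r beta a b 0 (9/2) 1.
Proof.
move=> ha hb.
have h := @Tot_lb R r beta a b 0 (9/2) 1 _ _ (hub_II ha hb) (fun q hq => clq_II q hq ha hb).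
lra.
Qed.

End Regions.



Definition Wm (R : realType) (r : nat) : 'M[R]_(nn r) :=
  \matrix_(u, v) (if u == v then 1 else if adjn u v then 2^-1 else 0).

Lemma two_vals (k kl kh : 'I_2) : kl != kh -> k != kh -> k = kl.
Proof.
move: k kl kh => [[|[|k]] hk] [[|[|l]] hl] [[|[|h]] hh] //=;
  by move=> *; apply: val_inj.
Qed.

Section Conn.
Context (R : realType) (r : nat) (sig : 'I_2 -> R) (kl kh : 'I_2) (hk : kl != kh)
  (s : {ffun 'I_(nn r) -> 'I_2}).

Definition bet (v : nat) : bool := s (inord v) == kh.

Lemma sig_sg (v : 'I_(nn r)) : sig (s v) = @sg R bet (sig kl) (sig kh) v.
Proof.
rewrite /sg /bet inord_val; case: eqP => [->//|/eqP h].
by rewrite (@two_vals _ _ _ hk h).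
Qed.

Lemma Cv_eq (v : 'I_(nn r)) :
  @Cv R (nn r) (Wm R r) sig s v = 2^-1 * \sum_(v' < nn r) (if adjn v v' then @sg R bet (sig kl) (sig kh) v' else 0).
Proof.
rewrite /Cv big_mkcond mulr_sumr; apply: eq_bigr => v' _.
rewrite mxE; case: (eqVneq v' v) => [->|hne].
  by rewrite adjn_irr /= mulr0.
rewrite /= sig_sg.
by case: (adjn v v'); rewrite ?mul0r ?mulr0.
Qed.

Lemma Dk_eq k : @Dk R (nn r) (Wm R r) sig k s =
  \sum_(v < nn r) (if s v == k then sig k - 1 + @Cv R (nn r) (Wm R r) sig s v else 0).
Proof. by rewrite /Dk big_mkcond. Qed.

Lemma profile_eq (w l m : R) : 0 <= sig kl -> 0 <= sig kh ->
  w * (\sum_(v < nn r) `|sig (s v)|) - l * @Dk R (nn r) (Wm R r) sig kh s - m * @Dk R (nn r) (Wm R r) sig kl s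
  = @Tot R r bet (sig kl) (sig kh) w l m.
Proof.
move=> h0 h1.
rewrite !Dk_eq /Tot !mulr_sumr -!sumrN -!big_split; apply: eq_bigr => v _ /=.
rewrite Cv_eq /inn /hv /fv.
have -> : \sum_(v0 < nn r) (if adjn v v0 then
     (if bet v then l else m) * @sg R bet (sig kl) (sig kh) v0 else 0)
   = (if bet v then l else m) * \sum_(v0 < nn r) (if adjn v v0 then @sg R bet (sig kl) (sig kh) v0 else 0).
  by rewrite mulr_sumr; apply: eq_bigr => v0 _; case: (adjn v v0); rewrite ?mulr0.
rewrite sig_sg.
have eb : (s v == kh) = bet v by rewrite /bet inord_val.
rewrite eb; case hb: (bet v).
  have -> : (s v == kl) = false.
    by apply/negbTE; move: hb; rewrite /bet inord_val => /eqP ->; rewrite eq_sym.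
  rewrite /sg hb ger0_norm //; ring.
have -> : (s v == kl).
  by apply/eqP; apply: (@two_vals _ _ _ hk); rewrite eb hb.
rewrite /sg hb ger0_norm //; ring.
Qed.

End Conn.



Lemma adjnC u v : adjn u v = adjn v u.
Proof.
rewrite /adjn eq_sym; congr (_ && _).
by case: (u < 2)%N; case: (v < 2)%N => //=; rewrite eq_sym.
Qed.

Lemma Wm_hw (R : realType) r : half_weight_graph (Wm R r).
Proof.
have h2 : (0 : R) < 2^-1 by rewrite invr_gt0 ltr0n.
have h2' : (2^-1 : R) <= 1 by rewrite invf_le1 ?ler1n ?ltr0n.
split; [|split; [|split]].
- move=> u v; rewrite !mxE eq_sym adjnC; done.
- move=> u v; rewrite !mxE; case: (u == v); first by rewrite ler01 lexx.
  case: (adjn u v); first by rewrite (ltW h2) h2'.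
  by rewrite lexx ler01.
- by move=> v; rewrite mxE eqxx.
- move=> u v huv; rewrite mxE (negbTE huv); case: (adjn u v) => //.
  by rewrite ltxx.
Qed.

Lemma Wm_bnd (R : realType) r (u v : 'I_(nn r)) : 0 <= Wm R r u v <= 1.
Proof. by case: (Wm_hw R r) => _ [h _]; apply: h. Qed.

Lemma Wm_hub (R : realType) r (u : 'I_(nn r)) k : (k < 2)%N ->
  Wm R r u (inord k) = if val u == k then 1 else 2^-1.
Proof.
move=> hk; have hk' : (k < nn r)%N by rewrite /nn; lia.
rewrite mxE -val_eqE /= inordK //.
case: eqP => // /eqP hne; rewrite adjnC.
clear hk'; move: hk hne; case: k => [|[|k]] //= _ hne.
  by rewrite adjn0 hne.
by rewrite adjn1 hne.
Qed.

Lemma OPT_le (R : realType) r : OPT_IR (Wm R r) <= 2.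
Proof.
set th := fun v : 'I_(nn r) => if (val v < 2)%N then (1 : R) else 0.
have th01 : forall v, 0 <= th v <= 1.
  by move=> v; rewrite /th; case: ifP => _; rewrite ?lexx ?ler01.
have hsum : \sum_(v < nn r) `|th v| = 2.
  rewrite (@sum_nn R (fun v => `|(if (v < 2)%N then (1 : R) else 0)|)) /= /ell /=.
  rewrite normr0 !addr0 big1 ?addr0 //.
  by rewrite normr1.
have hfeas : forall u, 1 <= \sum_(v < nn r) Wm R r u v * th v.
  move=> u.
  rewrite (eq_bigr (fun v : 'I_(nn r) => Wm R r u (inord v) * (if (v < 2)%N then (1 : R) else 0)));
    last by move=> v _; rewrite inord_val.
  rewrite (@sum_nn R (fun v => Wm R r u (inord v) * (if (v < 2)%N then (1 : R) else 0))) /= /ell /=.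
  rewrite big1 ?addr0; last by move=> q _; rewrite !mulr0 !addr0.
  rewrite !mulr1 !Wm_hub //.
  case: (val u == 0%N); case: (val u == 1%N); lra.
rewrite /OPT_IR; set E := (X in inf X).
have hE : has_lbound E.
  exists 0 => x [theta [_ [_ ->]]].
  by apply: sumr_ge0 => v _.
apply: (ge_inf hE).
exists th; split => //; split => //; split => //.
by move=> v; case/andP: (th01 v).
Qed.

Section Lower.
Context (R : realType) (r : nat) (hr : (2 <= r)%N) (sig : 'I_2 -> R)
  (phi : {perm 'I_(nn r)} -> {ffun 'I_(nn r) -> 'I_2} -> R)
  (Hb : binary_scheme sig phi) (Hp : persuasive (Wm R r) sig phi).

Let EJr := EJ R (nn r) phi.

Lemma EJ_ge c X : (forall s, c <= X s) -> c <= EJr X.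
Proof.
move=> h; rewrite -[c]mulr1 -(@sumJ _ _ _ _ Hb) mulr_sumr /EJr /EJ; apply: ler_sum => t _.
rewrite mulr_sumr; apply: ler_sum => s _.
by rewrite mulrC; apply: ler_wpM2l; [exact: (@J_ge0 _ _ _ _ Hb)|].
Qed.

Lemma EJ_lin (w l m : R) X Y Z :
  EJr (fun s => w * X s - l * Y s - m * Z s) = w * EJr X - l * EJr Y - m * EJr Z.
Proof.
rewrite /EJr /EJ !mulr_sumr -!sumrN -!big_split; apply: eq_bigr => t _ /=.
rewrite !mulr_sumr -!sumrN -!big_split; apply: eq_bigr => s _ /=; ring.
Qed.

Lemma lower_kk (kl kh : 'I_2) : kl != kh -> sig kl < sig kh ->
  1/20 * (nn r)%:R <= cost sig phi.
Proof.
move=> hk hab.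
case: Hb => _ [hs _].
have ha0 : 0 <= sig kl by case/andP: (hs kl).
have hb1 : sig kh <= 1 by case/andP: (hs kh).
have hb0 : 0 < sig kh by lra.
have hnn : ((nn r)%:R : R) = 4 * r%:R + 2.
  by rewrite /nn -addnS natrD natrM.
have hr' : (2 : R) <= r%:R by rewrite ler_nat.
have hcost : cost sig phi = EJr (fun s => \sum_(v < nn r) `|sig (s v)|) by [].
have hW := @Wm_bnd R r.
have Lo := @agg_ge0 _ _ _ _ _ Hb hW Hp kl.
have Hi0 := @agg_ge0 _ _ _ _ _ Hb hW Hp kh.
have Hi1 := @agg_le0 _ _ _ _ _ Hb hW Hp _ hb0.
case: (lerP (1/20) (sig kl)) => ha.
  rewrite hcost; apply: EJ_ge => s.
  have : (nn r)%:R * sig kl <= \sum_(v < nn r) `|sig (s v)|.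
    have -> : (nn r)%:R * sig kl = \sum_(v < nn r) sig kl.
      by rewrite sumr_const card_ord mulr_natl.
    apply: ler_sum => v _; rewrite ger0_norm; last by case/andP: (hs (s v)).
    case: (eqVneq (s v) kh) => [->|h]; first lra.
    by rewrite (@two_vals _ _ _ hk h).
  have : 0 <= (nn r)%:R :> R by rewrite ler0n.
  nra.
have ha' : 0 <= sig kl <= 1/20 by rewrite ha0 ltW.
case: (lerP (sig kh) (1/5)) => hb5.
  have : 1 <= EJr (fun s => 0 * \sum_(v < nn r) `|sig (s v)| - (9/2) * Dk R (nn r) (Wm R r) sig kh s
                    - 1 * Dk R (nn r) (Wm R r) sig kl s).
    apply: EJ_ge => s; rewrite profile_eq //; last exact: ltW.
    apply: (@Tot_II R r (bet r kh s) (sig kl) (sig kh)) => //.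
    by rewrite (ltW hb0) hb5.
  rewrite EJ_lin; rewrite /EJr in Lo Hi0 *; lra.
case: (lerP (4/5) (sig kh)) => hb45.
  have : 1/2 <= EJr (fun s => 0 * \sum_(v < nn r) `|sig (s v)| - (-5) * Dk R (nn r) (Wm R r) sig kh s
                    - 1 * Dk R (nn r) (Wm R r) sig kl s).
    apply: EJ_ge => s; rewrite profile_eq //; last exact: ltW.
    apply: (@Tot_I R r (bet r kh s) (sig kl) (sig kh)) => //; first lia.
    by rewrite hb45 hb1.
  rewrite EJ_lin; rewrite /EJr in Lo Hi1 *; lra.
have : r%:R / 4 <= EJr (fun s => 1 * \sum_(v < nn r) `|sig (s v)| - (1/40) * Dk R (nn r) (Wm R r) sig kh s
                    - (3/5) * Dk R (nn r) (Wm R r) sig kl s).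
  apply: EJ_ge => s; rewrite profile_eq //; last exact: ltW.
  apply: (@Tot_III R r (bet r kh s) (sig kl) (sig kh)) => //.
  by rewrite (ltW hb5) (ltW hb45).
rewrite EJ_lin -hcost hnn; rewrite /EJr in Lo Hi0 *; lra.
Qed.

Lemma lower : 1/20 * (nn r)%:R <= cost sig phi.
Proof.
case: (Hb) => hinj _.
have h01 : (0 : 'I_2) != 1 by [].
case: (ltgtP (sig 0) (sig 1)) => h.
- exact: lower_kk h01 h.
- by apply: lower_kk h; rewrite eq_sym.
- by move/hinj: h.
Qed.

End Lower.

Theorem theorem8p1 (R : realType) :
  exists c : R, 0 < c /\
  exists C : R, forall N : nat, exists n : nat, (N <= n)%N /\
  exists W : 'M[R]_n,
    half_weight_graph W /\
    OPT_IR W <= C /\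
    forall (sig : 'I_2 -> R) (phi : {perm 'I_n} -> {ffun 'I_n -> 'I_2} -> R),
      binary_scheme sig phi -> persuasive W sig phi ->
      c * n%:R <= cost sig phi.
Proof.
exists (1/20); split; first lra.
exists 2 => N.
exists (nn N.+2); split; first by rewrite /nn; lia.
exists (Wm R N.+2); split; first exact: Wm_hw.
split; first exact: OPT_le.
move=> sig phi Hb Hp; exact: lower.
Qed.
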